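(* Let $X^{(n)}=\{X_1,\dots,X_n\}\subset\mathbb{R}^d$ and $u^{(n)}=\{u_1,\dots,u_n\}\subset\mathbb{R}^d$, and fix $i\in\{1,\dots,n\}$. Then for every $\ell\in\mathbb{N}$ with $\mathrm{TD}^-(u_i;u^{(n)})>\ell/n$, there exists $R>0$ such that $\hat T_{Z^{(n)}}(u_i)\in R\,\mathbb{B}$ for all $Z^{(n)}\in\mathcal{Q}_{\ell,n}$.
   Context: $\mathbb{B}=\{x:\|x\|\leq1\}$. For a set $Z^{(n)}$ of $n$ points, $\hat T_{Z^{(n)}}$ denotes any bijection $T:u^{(n)}\to Z^{(n)}$ minimizing $\frac1n\sum_j\|T(u_j)-u_j\|^2$. $\mathcal{Q}_{\ell,n}$ is the set of all sets $Z^{(n)}$ of $n$ points of $\mathbb{R}^d$ sharing exactly $n-\ell$ elements with $X^{(n)}$. Lower Tukey depth: $\mathrm{TD}^-(u;u^{(n)})=\frac{n+1}{n}-\max_{v\in\mathcal{S}^{d-1}}\frac1n\sum_j\mathbf{1}(\langle v,u_j-u\rangle\geq0)$. *)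

(* Defs.v *)
From HB Require Import structures.
From mathcomp Require Import all_boot all_order all_algebra all_fingroup.
From mathcomp Require Import all_classical all_reals.
Set Implicit Arguments. Unset Strict Implicit. Unset Printing Implicit Defensive.
Import Order.TTheory GRing.Theory Num.Theory.
Local Open Scope ring_scope.
Local Open Scope classical_set_scope.

Definition dotp (R : realType) (d : nat) (x y : 'rV[R]_d) : R :=
  \sum_(k < d) x 0 k * y 0 k.

Definition sqnorm (R : realType) (d : nat) (x : 'rV[R]_d) : R := dotp x x.

Definition sphere (R : realType) (d : nat) : set 'rV[R]_d :=
  [set v | sqnorm v = 1].

Definition in_ball (R : realType) (d : nat) (r : R) (x : 'rV[R]_d) : Prop :=
  Num.sqrt (sqnorm x) <= r.

(* lower Tukey depth TD^-(u; u^(n)) = (n+1)/n - max_{v in S^{d-1}}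
   (1/n) sum_j 1(<v, u_j - u> >= 0); the max is written as a sup
   (the set of values is finite, so the sup is attained). *)
Definition lower_tukey_depth (R : realType) (d n : nat)
    (x : 'rV[R]_d) (u : 'I_n -> 'rV[R]_d) : R :=
  (n.+1)%:R / n%:R -
  sup [set (n%:R)^-1 * (#|[set j : 'I_n | 0 <= dotp v (u j - x)]|)%:R
       | v in @sphere R d].

Definition transport_cost (R : realType) (d n : nat)
    (u Z : 'I_n -> 'rV[R]_d) (s : 'S_n) : R :=
  (n%:R)^-1 * \sum_(j < n) sqnorm (Z (s j) - u j).

(* s encodes an optimal bijection \hat T_Z : u_j |-> Z_(s j) *)
Definition optimal_transport (R : realType) (d n : nat)
    (u Z : 'I_n -> 'rV[R]_d) (s : 'S_n) : Prop :=
  forall t : 'S_n, transport_cost u Z s <= transport_cost u Z t.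

(* Z^(n) in Q_{l,n}: a set of n (distinct) points sharing exactly n - l
   elements with X^(n) *)
Definition in_Q (R : realType) (d n l : nat)
    (X Z : 'I_n -> 'rV[R]_d) : Prop :=
  injective Z /\ #|[set j : 'I_n | Z j \in codom X]| = (n - l)%N.

(* Main.v *)
Require Import Defs.
From HB Require Import structures.
From mathcomp Require Import all_boot all_order all_algebra all_fingroup.
From mathcomp Require Import all_classical all_reals all_analysis.
From mathcomp Require Import ring lra.
Import Order.TTheory GRing.Theory Num.Theory.
Import numFieldNormedType.Exports.
Local Open Scope ring_scope.
Local Open Scope classical_set_scope.

Lemma sum_cont (R : realType) (T : topologicalType) (m : nat) (f : 'I_m -> T -> R) :
  (forall k, continuous (f k)) -> continuous (fun x => \sum_(k < m) f k x).
Proof.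
elim: m f => [|m IH] f fc.
  have -> : (fun x => \sum_(k < 0) f k x) = (fun=> 0) by apply/funext => y; rewrite big_ord0.
  by move=> x; exact: cst_continuous.
have -> : (fun x => \sum_(k < m.+1) f k x) =
   (fun x => \sum_(k < m) f (widen_ord (leqnSn m) k) x) + (f ord_max).
  by apply/funext => y; rewrite big_ord_recr.
move=> x; apply: continuousD; last exact: fc.
by apply: IH => k; exact: fc.
Qed.

Lemma dotp_cont (R : realType) (d : nat) (w : 'rV[R]_d) :
  continuous (fun v : 'rV[R]_d => dotp v w).
Proof.
rewrite /dotp; apply: sum_cont => k x.
apply: (continuousM (s:=fun v : 'rV[R]_d => v 0 k) (t:=fun=> w 0 k)).
  exact: coord_continuous.
exact: cst_continuous.
Qed.

Lemma sqnorm_cont (R : realType) (d : nat) : continuous (@sqnorm R d).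
Proof.
rewrite /sqnorm /dotp; apply: sum_cont => k x.
apply: (continuousM (s:=fun v : 'rV[R]_d => v 0 k) (t:=fun v => v 0 k));
  exact: coord_continuous.
Qed.

Lemma term_le_sum (R : realType) (I : finType) (F : I -> R) j :
  (forall i, 0 <= F i) -> F j <= \sum_i F i.
Proof. by move=> F0; rewrite (bigD1 j) //= lerDl sumr_ge0. Qed.

Lemma sphere_coord (R : realType) (d : nat) (v : 'rV[R]_d) k :
  sqnorm v = 1 -> `|v 0 k| <= 1.
Proof.
move=> sv; have : v 0 k * v 0 k <= 1.
  rewrite -sv /sqnorm /dotp; apply: (@term_le_sum R _ (fun k => v 0 k * v 0 k)).
  by move=> i; rewrite -expr2 sqr_ge0.
by move=> h; rewrite ler_norml; apply/andP; split; nra.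
Qed.

Lemma sphere_compact (R : realType) (d : nat) : compact (@sphere R d).
Proof.
apply: bounded_closed_compact.
  exists 1; split; first by rewrite realE ler01.
  move=> M M1 v sv.
  rewrite /Num.norm /= mx_normrE; apply/bigmax_leP; split; first by lra.
  move=> [a b] _ /=; rewrite (ord1 a).
  have := @sphere_coord R d v b sv; lra.
rewrite /sphere.
apply: (@preimage_closed _ _ (@sqnorm R d) [set 1]); last exact: closed_eq.
by move=> x _; exact: sqnorm_cont.
Qed.

Lemma uniform_count (R : realType) (d n : nat) (w : 'I_n -> 'rV[R]_d) (N : nat) :
  (forall v, sphere v -> (#|[set j | (dotp v (w j) <= 0)%R]| <= N)%N) ->
  exists K : nat, forall v, sphere v ->
    (#|[set j | (dotp v (w j) <= (K.+1%:R)^-1)%R]| <= N)%N.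
Proof.
move=> H.
pose U := fun k : nat => [set v : 'rV[R]_d |
   (#|[set j | (dotp v (w j) <= (k.+1%:R)^-1)%R]| <= N)%N].
have Uo : forall k, open (U k).
  move=> k; rewrite openE => v Uv.
  set c := (k.+1%:R : R)^-1.
  have : \forall x \near v, forall j, c < dotp v (w j) -> c < dotp x (w j).
    apply: (@filter_forall _ _ (fun j x => c < dotp v (w j) -> c < dotp x (w j)) (nbhs v) _) => j.
    case: (ltP c (dotp v (w j))) => h.
      have nb : nbhs (dotp v (w j)) [set y | c < y].
        by apply: open_nbhs_nbhs; split; [exact: open_gt | exact: h].
      have := @dotp_cont R d (w j) v _ nb.
      by move=> hh; apply: (@filterS _ (nbhs v) _ _ _ _ hh) => x /= hx _.
    by apply: filterE => x.
  apply: filterS => x Hx; rewrite /U /=.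
  move: Uv; rewrite /U /=; apply: leq_trans; apply: subset_leq_card; apply/fintype.subsetP => j.
  rewrite !inE /= => hj; rewrite leNgt; apply/negP => /Hx hc.
  by move: (lt_le_trans hc hj); rewrite ltxx.
have cov : @sphere R d `<=` \bigcup_(k in [set: nat]) U k.
  move=> v sv.
  exists (\sum_j Num.Def.trunc (`|dotp v (w j)|^-1))%N => //.
  rewrite /U /=; apply: leq_trans _ (H v sv); apply: subset_leq_card.
  apply/fintype.subsetP => j; rewrite !inE /= => hj; rewrite leNgt; apply/negP => hpos.
  have h1 : `|dotp v (w j)|^-1 < ((\sum_j Num.Def.trunc (`|dotp v (w j)|^-1))%N.+1%:R).
    apply: lt_le_trans (truncnS_gt _) _.
    by rewrite ler_nat ltnS (bigD1 j) //= leq_addr.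
  rewrite (gtr0_norm hpos) invf_plt ?posrE ?ltr0n // in h1.
  by move: (le_lt_trans hj h1); rewrite ltxx.
have := sphere_compact R d; rewrite compact_cover => /(_ nat [set: nat] U).
case=> [k _|//|D' _ HD']; first exact: Uo.
exists (\max_(k <- finmap.enum_fset D') k)%N => v sv.
have [k kD Uk] := HD' v sv.
apply: leq_trans _ Uk; apply: subset_leq_card; apply/fintype.subsetP => j; rewrite !inE /=.
move=> hj; apply: le_trans hj _.
rewrite lef_pV2 ?posrE ?ltr0n // ler_nat ltnS.
by apply: (@leq_bigmax_seq _ _ xpredT (fun k => k) k).
Qed.

Lemma swap_id (R : realType) (d : nat) (z y a b : 'rV[R]_d) :
  sqnorm (z - a) + sqnorm (y - b) - (sqnorm (y - a) + sqnorm (z - b)) =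
  2 * (dotp z (b - a) - dotp y (b - a)).
Proof.
rewrite /sqnorm /dotp -!big_split -sumrB -sumrB mulr_sumr /=.
by apply: eq_bigr => k _; rewrite !mxE; ring.
Qed.

Lemma dotpZ (R : realType) (d : nat) (c : R) (z w : 'rV[R]_d) :
  dotp (c *: z) w = c * dotp z w.
Proof.
by rewrite /dotp mulr_sumr; apply: eq_bigr => k _; rewrite !mxE mulrA.
Qed.

Lemma dotpN (R : realType) (d : nat) (z w : 'rV[R]_d) :
  dotp (- z) w = - dotp z w.
Proof.
by rewrite /dotp -sumrN; apply: eq_bigr => k _; rewrite !mxE mulNr.
Qed.

Lemma sqnorm_ge0 (R : realType) (d : nat) (z : 'rV[R]_d) : 0 <= sqnorm z.
Proof. by apply: sumr_ge0 => k _; rewrite -expr2 sqr_ge0. Qed.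

Lemma sqnormZ (R : realType) (d : nat) (c : R) (z : 'rV[R]_d) :
  sqnorm (c *: z) = c ^+ 2 * sqnorm z.
Proof.
rewrite /sqnorm /dotp mulr_sumr; apply: eq_bigr => k _; rewrite !mxE; ring.
Qed.

Lemma swap_le (R : realType) (d n : nat) (u Z : 'I_n -> 'rV[R]_d) (s : 'S_n)
   (i j : 'I_n) : optimal_transport u Z s -> j != i ->
  sqnorm (Z (s i) - u i) + sqnorm (Z (s j) - u j) <=
  sqnorm (Z (s j) - u i) + sqnorm (Z (s i) - u j).
Proof.
move=> opt ji; have := opt (tperm i j * s)%g; rewrite /transport_cost.
have n0 : (0 < n)%N by apply: leq_ltn_trans (leq0n i) (ltn_ord i).
rewrite ler_pM2l ?invr_gt0 ?ltr0n //.
rewrite [X in X <= _](bigD1 i) // [X in _ <= X](bigD1 i) //=.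
rewrite [\sum_(k | k != i) sqnorm (Z (s k) - u k)](bigD1 j) //=.
rewrite [\sum_(k | k != i) sqnorm (Z ((tperm i j * s)%g k) - u k)](bigD1 j) //=.
rewrite !permM tpermL tpermR.
have -> : \sum_(k | (k != i) && (k != j)) sqnorm (Z ((tperm i j * s)%g k) - u k) =
          \sum_(k | (k != i) && (k != j)) sqnorm (Z (s k) - u k).
  by apply: eq_bigr => k /andP [ki kj]; rewrite permM tpermD // eq_sym.
lra.
Qed.

Lemma tukey_bound (R : realType) (d n : nat) (u : 'I_n -> 'rV[R]_d) (i : 'I_n)
  (l : nat) : lower_tukey_depth (u i) u > l%:R / n%:R ->
  forall v, sphere v ->
  (#|[set j : 'I_n | (0 <= dotp v (u j - u i))%R]| + l <= n)%N.
Proof.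
have n0 : (0 < n)%N by apply: leq_ltn_trans (leq0n i) (ltn_ord i).
rewrite /lower_tukey_depth; set E := (X in sup X) => H v sv.
set c := #|_|.
have cn : (c <= n)%N by rewrite /c; apply: leq_trans (max_card _) _; rewrite card_ord.
have Ec : E (n%:R^-1 * c%:R) by exists v.
have ub : has_ubound E.
  exists 1 => x [v' _ <-].
  rewrite ler_pdivrMl ?ltr0n // mulr1 ler_nat.
  by apply: leq_trans (max_card _) _; rewrite card_ord.
have := ub_le_sup ub Ec.
move=> hS.
have x0 : 0 < (n%:R : R)^-1 by rewrite invr_gt0 ltr0n.
have : (c + l)%:R * (n%:R : R)^-1 < n.+1%:R * (n%:R)^-1.
  rewrite natrD mulrDl [c%:R * _]mulrC.
  move: H hS; rewrite /=.
  move: (l%:R / n%:R) (n.+1%:R / n%:R) ((n%:R : R)^-1 * c%:R) (sup E) => a b e s' H1 H2.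
  lra.
rewrite ltr_pM2r // ltr_nat ltnS; exact.
Qed.

Lemma inv_bound (R : realType) (nu k C : R) :
  0 < nu -> 0 < k -> C * k <= nu -> nu^-1 * C <= k^-1.
Proof.
move=> nu0 k0 h.
rewrite -(ler_pM2l nu0) mulrA mulfV ?gt_eqF // mul1r ler_pdivlMr //.
Qed.

Theorem mainTheorem10 (R : realType) (d n : nat)
    (X u : 'I_n -> 'rV[R]_d) (i : 'I_n)
    (hX : injective X) (hu : injective u) (l : nat) :
  lower_tukey_depth (u i) u > l%:R / n%:R ->
  exists r : R, 0 < r /\
    forall (Z : 'I_n -> 'rV[R]_d) (s : 'S_n),
      in_Q l X Z -> optimal_transport u Z s -> in_ball r (Z (s i)).
Proof.
move=> H.
have T1 : forall v, sphere v ->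
    (#|[set j | (dotp v (u j - u i) <= 0)%R]| <= n - l)%N.
  move=> v sv.
  have sv' : sphere (- v).
    by move: sv; rewrite /sphere /= -scaleN1r sqnormZ sqrrN expr1n mul1r.
  have hb := @tukey_bound R d n u i l H _ sv'.
  have -> : #|[set j | (dotp v (u j - u i) <= 0)%R]| =
            #|[set j : 'I_n | (0 <= dotp (- v) (u j - u i))%R]|.
    apply: eq_card => j; apply/idP/idP; rewrite !inE /= dotpN oppr_ge0 //.
  by have := leq_sub2r l hb; rewrite addnK.
have [K HK] := @uniform_count R d n (fun j => u j - u i) (n - l)%N T1.
pose C := \sum_(m < n) \sum_(j < n) `|dotp (X m) (u j - u i)|.
pose B := \sum_(m < n) Num.sqrt (sqnorm (X m)).
have C0 : 0 <= C by apply: sumr_ge0 => m _; apply: sumr_ge0 => j _.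
have B0 : 0 <= B by apply: sumr_ge0 => m _; exact: sqrtr_ge0.
have k0 : 0 < (K.+1%:R : R) by rewrite ltr0n.
have CK : 0 <= (C + 1) * K.+1%:R by apply: mulr_ge0; [lra | exact: ltW].
exists (B + (C + 1) * K.+1%:R + 1); split.
  by move: B0 CK; move: B ((C + 1) * K.+1%:R) => b c; lra.
move=> Z s [Zinj Zcard] opt; rewrite /in_ball.
case: (boolP (Z (s i) \in codom X)) => [/codomP [m ->] | zout].
  have : Num.sqrt (sqnorm (X m)) <= B.
    by apply: (@term_le_sum R _ (fun m => Num.sqrt (sqnorm (X m)))) => k; exact: sqrtr_ge0.
  by move: B0 CK; move: B ((C + 1) * K.+1%:R) (Num.sqrt (sqnorm (X m))) => b c e; lra.
rewrite leNgt; apply/negP => big.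
set z := Z (s i) in zout big *.
have [nu nuE] : exists nu, nu = Num.sqrt (sqnorm z) by eexists.
rewrite -nuE in big.
have nu0 : 0 < nu.
  by move: B0 CK big; move: B ((C + 1) * K.+1%:R) => b c; lra.
have sz0 : 0 < sqnorm z by rewrite -sqrtr_gt0 -nuE.
pose v := nu^-1 *: z.
have sv : sphere v.
  rewrite /sphere /= /v sqnormZ exprVn nuE sqr_sqrtr ?sqnorm_ge0 // mulVf //.
  by rewrite gt_eqF.
have CKnu : C * K.+1%:R <= nu.
  by move: B0 C0 CK big k0; move: B C (K.+1%:R : R) => b c k; nra.
have Hin : forall j, Z (s j) \in codom X ->
    (dotp v (u j - u i) <= K.+1%:R^-1)%R.
  move=> j /codomP [m Hm].
  have ji : j != i.
    by apply/eqP => e; move: zout; rewrite /z -e Hm codom_f.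
  have hsw := @swap_le R d n u Z s i j opt ji.
  have hid := @swap_id R d z (Z (s j)) (u i) (u j).
  have hdz : dotp z (u j - u i) <= dotp (Z (s j)) (u j - u i).
    move: hsw hid; move: (sqnorm (z - u i)) (sqnorm (Z (s j) - u j))
      (sqnorm (Z (s j) - u i)) (sqnorm (z - u j)) (dotp z (u j - u i))
      (dotp (Z (s j)) (u j - u i)) => a1 a2 a3 a4 a5 a6; lra.
  have hdy : dotp (Z (s j)) (u j - u i) <= C.
    rewrite Hm; apply: le_trans (ler_norm _) _.
    have h1 := @term_le_sum R _ (fun k => `|dotp (X m) (u k - u i)|) j (fun k => normr_ge0 _).
    have h2 := @term_le_sum R _ (fun m => \sum_(j < n) `|dotp (X m) (u j - u i)|) m
      (fun k => sumr_ge0 _ (fun _ _ => normr_ge0 _)).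
    exact: le_trans h1 h2.
  rewrite /v dotpZ; apply: le_trans _ (@inv_bound R nu _ C nu0 k0 CKnu).
  rewrite ler_pM2l ?invr_gt0 //; exact: le_trans hdz hdy.
have hA := HK v sv.
pose Inl := [pred j | Z (s j) \in codom X].
have sub : [predU1 i & Inl] \subset
   [set j | (dotp v (u j - u i) <= K.+1%:R^-1)%R].
  apply/fintype.subsetP => j; rewrite !inE /=.
  case/orP => [/eqP -> | hj].
    by rewrite /dotp big1 ?invr_ge0 ?ler0n // => k _; rewrite !mxE subrr mulr0.
  exact: Hin.
have cI : #|Inl| = (n - l)%N.
  rewrite -Zcard.
  have -> : #|Inl| = #|[preim s of [pred j | Z j \in codom X]]| by [].
  rewrite card_preim; last exact: perm_inj.
  apply: eq_card => j; rewrite !inE /=.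
  have -> : j \in codom s by rewrite -[j](permKV s) codom_f.
  by apply/idP/idP; rewrite inE.
have := leq_trans (subset_leq_card sub) hA.
by rewrite cardU1 cI /Inl inE /= zout ltnn.
Qed.
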